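(* Let $\boldsymbol X \in \mathbb{R}^{n\times d}$, $\boldsymbol y \in \mathbb{R}^n$, $\boldsymbol M = \boldsymbol X^\top \boldsymbol X$, $\boldsymbol r = \boldsymbol X^\top \boldsymbol y$. Assume (A1) $\boldsymbol r > \mathbf 0$ and (A2) $M_{ij}\le 0$ for all $i\neq j$. Then $\boldsymbol M$ is positive definite; in particular $n\ge d$.
   Context: $\boldsymbol r>\mathbf 0$ means every coordinate of $\boldsymbol r$ is positive. *)

(* Defs.v *)
From HB Require Import structures.
From mathcomp Require Import all_boot all_order all_algebra.
Set Implicit Arguments. Unset Strict Implicit. Unset Printing Implicit Defensive.
Import Order.TTheory GRing.Theory Num.Theory.
Local Open Scope ring_scope.

Definition posdef (R : realFieldType) (d : nat) (M : 'M[R]_d) : Prop :=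
  forall v : 'cV[R]_d, v != 0 -> 0 < ((v^T *m M *m v) 0 0).

(* Main.v *)
Require Import Defs.
From HB Require Import structures.
From mathcomp Require Import all_boot all_order all_algebra.
From mathcomp Require Import lra.
Import Order.TTheory GRing.Theory Num.Theory.
Local Open Scope ring_scope.

Lemma qf_sum (R : realFieldType) (d : nat) (M : 'M[R]_d) (v : 'cV[R]_d) :
  (v^T *m M *m v) 0 0 = \sum_j \sum_i v i 0 * M i j * v j 0.
Proof.
rewrite mxE; apply: eq_bigr => j _; rewrite mxE mulr_suml.
by apply: eq_bigr => i _; rewrite mxE.
Qed.

Lemma qf_sq (R : realFieldType) (n d : nat) (X : 'M[R]_(n, d)) (v : 'cV[R]_d) :
  (v^T *m (X^T *m X) *m v) 0 0 = \sum_k ((X *m v) k 0) ^+ 2.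
Proof.
rewrite mulmxA -trmx_mul -mulmxA mxE; apply: eq_bigr => k _.
by rewrite mxE expr2.
Qed.

Theorem proposition1 (R : realFieldType) (n d : nat)
  (X : 'M[R]_(n, d)) (y : 'cV[R]_n)
  (A1 : forall i : 'I_d, 0 < (X^T *m y) i 0)
  (A2 : forall i j : 'I_d, i != j -> (X^T *m X) i j <= 0) :
  posdef (X^T *m X) /\ (d <= n)%N.
Proof.
have PD : posdef (X^T *m X).
  move=> v vN0.
  pose u : 'cV[R]_d := \col_i `|v i 0|.
  have le : (u^T *m (X^T *m X) *m u) 0 0 <= (v^T *m (X^T *m X) *m v) 0 0.
    rewrite !qf_sum; apply: ler_sum => j _; apply: ler_sum => i _.
    rewrite /u ![(\col__ _) _ _]mxE.
    have [->|ij] := eqVneq i j.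
      have e : `|v j 0| * `|v j 0| = v j 0 * v j 0 by rewrite -!expr2 real_normK ?num_real.
      by rewrite mulrAC e [X in _ <= X]mulrAC.
    have h1 := A2 _ _ ij.
    have h2 : v i 0 * v j 0 <= `|v i 0| * `|v j 0| by rewrite -normrM ler_norm.
    set a := (X^T *m X) i j in h1 *.
    have e1 : forall x z : R, x * a * z = a * (x * z).
      by move=> x z; rewrite mulrAC mulrC.
    by rewrite !e1 ler_wnM2l.
  apply: lt_le_trans le.
  have [i vi] : exists i, v i 0 != 0.
    apply/existsP; apply: contraNT vN0; rewrite negb_exists => /forallP H.
    apply/eqP/matrixP => i j; rewrite (ord1 j) mxE; exact/eqP/negPn/H.
  have ur : 0 < (u^T *m (X^T *m y)) 0 0.
    rewrite mxE (bigD1 i) //=.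
    have hb : 0 <= \sum_(k | k != i) u^T 0 k * (X^T *m y) k 0.
      by apply: sumr_ge0 => k _; rewrite [u^T 0 k]mxE mxE mulr_ge0 // ltW.
    have ha : 0 < u^T 0 i * (X^T *m y) i 0.
      by rewrite [u^T 0 i]mxE mxE mulr_gt0 ?normr_gt0.
    lra.
  rewrite lt_def qf_sq sumr_ge0 ?andbT; last by move=> k _; exact: sqr_ge0.
  apply/negP => /eqP H0.
  have Xu0 : X *m u = 0.
    apply/matrixP => k j; rewrite (ord1 j) [RHS]mxE.
    have := psumr_eq0P (fun k _ => sqr_ge0 ((X *m u) k 0)) H0 (i:=k) isT.
    by move/eqP; rewrite expf_eq0 /= => /eqP.
  move: ur; rewrite mulmxA -trmx_mul Xu0 trmx0 mul0mx mxE ltxx //.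
split => //.
rewrite leqNgt; apply/negP => dn.
have : kermx X^T != 0.
  by rewrite -mxrank_eq0 mxrank_ker -lt0n subn_gt0 (leq_ltn_trans (rank_leq_col _)).
case/matrix0Pn => i [j kij].
have rN0 : (row i (kermx X^T))^T != 0.
  apply/eqP => /matrixP/(_ j 0); rewrite [LHS]mxE [LHS]mxE [RHS]mxE => E; by rewrite E eqxx in kij.
have := PD _ rN0.
by rewrite trmxK mulmxA -row_mul mulmx_ker row0 !mul0mx mxE ltxx.
Qed.
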